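(* Let $(X;Y,Z)$ be a non-degenerate subwing triple in $\mathcal{C}_n$, and let $Y'\in\mathcal{W}_Y$ and $Z'\in\mathcal{W}_Z$. (i) There are no nonzero $\mathcal{T}$-maps $Z'\to Y'$. (ii) There are no nonzero $\mathcal{T}$-maps $Y'\to Z'$. (iii) There is a nonzero $\mathcal{D}$-map $Z'\to Y'$ if and only if $Z'$ is on the left edge of $\mathcal{W}_Z$ and $Y'$ is on the right edge of $\mathcal{W}_Y$; in this case this map factors through the (nonzero) $\mathcal{D}$-map $Z\to Y$. (iv) There is a nonzero $\mathcal{D}$-map $Y'\to Z'$ if and only if $Z'$ is on the right edge of $\mathcal{W}_Z$, $Y'$ is on the left edge of $\mathcal{W}_Y$, and $\operatorname{ql}X=n-1$; in this case this map factors through the nonzero $\mathcal{D}$-endomorphism of $X$.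
   Context: Let $k$ be algebraically closed, $n\ge2$, $\mathcal{T}_n$ the tube of rank $n$ (finite-dimensional nilpotent representations of the cyclically oriented $\tilde A_{n-1}$-quiver; hereditary, AR-translation $\tau$), $\mathcal{C}_n=D^b(\mathcal{T}_n)/\tau^{-1}[1]$ the cluster tube, with indecomposables identified with those of $\mathcal{T}_n$. Indecomposables have coordinates $(a,b)$, $a\in\mathbb{Z}/n$, $b\ge1$ the quasilength $\operatorname{ql}$, with $\tau(a,b)=(a-1,b)$ and irreducible maps $(a,b)\to(a,b+1)$ and $(a,b)\to(a+1,b-1)$ ($b\ge2$). For indecomposables $X,Y$, $\operatorname{Hom}_{\mathcal{C}_n}(X,Y)=\operatorname{Hom}_{\mathcal{T}_n}(X,Y)\oplus\operatorname{Hom}_{D^b}(X,\tau^{-1}Y[1])$, the second summand $\cong D\operatorname{Hom}_{\mathcal{T}_n}(Y,\tau^2X)$; elements of the first are $\mathcal{T}$-maps, of the second $\mathcal{D}$-maps. For $X=(a,i)$, $i\le n-1$, the wing $\mathcal{W}_X$ is $\{(a+s,i'):s\ge0,i'\ge1,s+i'\le i\}$, with left edge $\{(a,i'):1\le i'\le i\}$ and right edge $\{(a+i-i',i'):1\le i'\le i\}$. A non-degenerate subwing triple $(X;Y,Z)$ consists of $X=(a,b)$ with $3\le b\le n-1$, $Y=(a,c)$ and $Z=(a+c+1,b-c-1)$ for some $1\le c\le b-2$. *)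

(* Defs.v *)
From mathcomp Require Import all_boot all_algebra.
Unset Printing Implicit Defensive.
Import GRing.Theory.
Local Open Scope ring_scope.

Section Tube.
Variable k : fieldType.

(* The indecomposable (a,b) (a read modulo n, b = quasilength) is the uniserial
   nilpotent representation of the cyclic quiver with basis e_0,...,e_(b-1),
   e_j sitting at vertex a+j (mod n), with arrows acting by the nilpotent shift
   N e_j = e_(j-1), N e_0 = 0.  So (a,b) has socle at vertex a; (a,b) -> (a,b+1)
   is the irreducible mono and (a,b) -> (a+1,b-1) the irreducible epi. *)
Definition nilp (b : nat) : 'M[k]_b := \matrix_(i, j) ((i.+1 == j :> nat)%:R).

(* A T-map (a,b) -> (c,d): matrix f : 'M_(d,b) (f l j = coefficient of e'_l in
   f(e_j)) commuting with the arrows and preserving the vertex grading. *)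
Definition is_Tmap (n a b c d : nat) (f : 'M[k]_(d, b)) : bool :=
  (f *m nilp b == nilp d *m f) &&
  [forall l : 'I_d, forall j : 'I_b,
      (f l j != 0) ==> (c + l == a + j %[mod n])%N].

(* first coordinate of tau^2 (a,b) = (a-2,b), read modulo n (n >= 2) *)
Definition tau2 (n a : nat) : nat := (a + (n - 2))%N.

(* D-maps X -> Y are elements of D Hom_T(Y, tau^2 X); every linear functional on
   'M_(m,p) is h |-> pairing Phi h for a unique Phi. *)
Definition pairing m p (Phi h : 'M[k]_(m, p)) : k :=
  \sum_(i < m) \sum_(j < p) Phi i j * h i j.

Definition Dmap_nz (n a b c d : nat) (Phi : 'M[k]_(b, d)) : Prop :=
  exists h : 'M[k]_(b, d), is_Tmap n c d (tau2 n a) b h /\ pairing b d Phi h != 0.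

(* The D-map Psi : S' -> T' factors as g o Phi o f through a nonzero D-map
   Phi : S -> T, with T-maps f : S' -> S and g : T -> T'.  The composite
   g o Phi o f in D Hom_T(T', tau^2 S') is h |-> Phi(tau^2(f) o h o g), and
   tau^2 acts on matrices as the identity in this model. *)
Definition Dfactors (n s1' s2' t1' t2' s1 s2 t1 t2 : nat)
    (Psi : 'M[k]_(s2', t2')) : Prop :=
  exists (Phi : 'M[k]_(s2, t2)) (f : 'M[k]_(s2, s2')) (g : 'M[k]_(t2', t2)),
    [/\ Dmap_nz n s1 s2 t1 t2 Phi, is_Tmap n s1' s2' s1 s2 f,
        is_Tmap n t1 t2 t1' t2' g &
        forall h : 'M[k]_(s2', t2'), is_Tmap n t1' t2' (tau2 n s1') s2' h ->
          pairing s2' t2' Psi h = pairing s2 t2 Phi (f *m h *m g)].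

End Tube.

Definition in_wing (n a i a' i' : nat) : Prop :=
  exists s : nat, (a' == a + s %[mod n])%N /\ (1 <= i')%N /\ (s + i' <= i)%N.
Definition left_edge (n a i a' i' : nat) : Prop :=
  (a' == a %[mod n])%N /\ (1 <= i' <= i)%N.
Definition right_edge (n a i a' i' : nat) : Prop :=
  (a' == a + i - i' %[mod n])%N /\ (1 <= i' <= i)%N.
Arguments nilp {k} b.
Arguments is_Tmap {k} n a b c d f.
Arguments pairing {k} m p Phi h.
Arguments Dmap_nz {k} n a b c d Phi.
Arguments Dfactors {k} n s1' s2' t1' t2' s1 s2 t1 t2 Psi.

(* Main.v *)
Require Import Defs.
From mathcomp Require Import all_boot all_algebra.
From mathcomp Require Import zify.
Set Implicit Arguments. Unset Strict Implicit.
Import GRing.Theory.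

Lemma cong_small n x y : x %% n = y %% n -> x <= y -> y < x + n -> x = y.
Proof.
move=> H Hxy Hyn.
have E : y = x + (y - x) by lia.
rewrite E in H.
have : (x + 0 == x + (y - x) %[mod n]) by rewrite addn0 H.
rewrite eqn_modDl mod0n => /eqP Hd.
rewrite modn_small in Hd; last by lia.
lia.
Qed.

Section Gen.
Variable k : fieldType.
Local Open Scope ring_scope.

Definition shiftmx d b (p : nat) : 'M[k]_(d,b) := \matrix_(l, j) (((l + p)%N == j :> nat)%:R).

Lemma sum_delta b x (G : nat -> k) :
  \sum_(m < b) ((x == m :> nat)%:R * G m) = if (x < b)%N then G x else 0.
Proof.
case: ifP => Hx.
  rewrite (bigD1 (Ordinal Hx)) //= eqxx mul1r big1 ?addr0 // => i Hi.
  case: eqP => [Ex|]; last by rewrite mul0r.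
  exfalso; move/negP: Hi; apply; apply/eqP; apply: val_inj; by rewrite /= Ex.
rewrite big1 // => i _; case: eqP => [E|]; last by rewrite mul0r.
by move: (ltn_ord i); rewrite -E Hx.
Qed.

Lemma shift_comm d b p : (b <= d + p)%N -> shiftmx d b p *m Defs.nilp b = Defs.nilp d *m shiftmx d b p.
Proof.
move=> H; apply/matrixP => l j; rewrite !mxE.
under eq_bigr => m _ do rewrite !mxE.
under [RHS]eq_bigr => m _ do rewrite !mxE.
rewrite (sum_delta _ (l + p) (fun m => (m.+1 == j)%:R)).
rewrite (sum_delta _ l.+1 (fun m => (m + p == j)%:R)).
have := ltn_ord j; have := ltn_ord l.
case: ifP; case: ifP => H1 H2 Hl Hj //; case: eqP => E //; try (case: eqP => E' //); lia.
Qed.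

Lemma shift_Tmap n a b c d p : (b <= d + p)%N -> (c == a + p %[mod n])%N ->
  is_Tmap n a b c d (shiftmx d b p).
Proof.
move=> H1 H2; apply/andP; split; first by apply/eqP; apply: shift_comm.
apply/forallP => l; apply/forallP => j; apply/implyP; rewrite mxE.
case: ((l + p)%N =P j) => [E _|_]; last by rewrite eqxx.
rewrite -E; have -> : (a + (l + p) = (a + p) + l)%N by lia.
by apply/eqP; rewrite -modnDml (eqP H2) modnDml.
Qed.

Lemma pairing_nz m p (P h : 'M[k]_(m,p)) : pairing _ _ P h != 0 -> exists i j, h i j != 0.
Proof.
move=> H; case: (pickP (fun ij : 'I_m * 'I_p => h ij.1 ij.2 != 0)) => [[i j] Hij | H0].
  by exists i, j.
move: H; rewrite /pairing big1 ?eqxx // => i _; rewrite big1 // => j _.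
by have := H0 (i, j); rewrite /= => /negbFE/eqP ->; rewrite mulr0.
Qed.

Lemma pairing_single m p (P h : 'M[k]_(m,p)) i0 j0 :
  (forall i j, P i j * h i j != 0 -> i = i0 /\ j = j0) ->
  pairing _ _ P h = P i0 j0 * h i0 j0.
Proof.
move=> H; rewrite /pairing (bigD1 i0) //= (bigD1 j0) //= big1 ?addr0.
  rewrite big1 ?addr0 // => i Hi; rewrite big1 // => j _.
  apply/eqP/negPn/negP => /H [E _]; by rewrite E eqxx in Hi.
move=> j Hj; apply/eqP/negPn/negP => /H [_ E]; by rewrite E eqxx in Hj.
Qed.

Lemma mul3_single m1 m2 m3 m4 (A : 'M[k]_(m1,m2)) (B : 'M[k]_(m2,m3)) (C : 'M[k]_(m3,m4)) i l r0 s0 :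
  (forall r s, B r s != 0 -> r = r0 /\ s = s0) ->
  (A *m B *m C) i l = A i r0 * B r0 s0 * C s0 l.
Proof.
move=> H; rewrite mxE (bigD1 s0) //= big1 ?addr0.
  rewrite mxE (bigD1 r0) //= big1 ?addr0 // => r Hr.
  case: (B r s0 =P 0) => [->|/eqP Hb]; first by rewrite mulr0.
  by case: (H _ _ Hb) => E _; rewrite E eqxx in Hr.
move=> s Hs; rewrite mxE big1 ?mul0r // => r _.
case: (B r s =P 0) => [->|/eqP Hb]; first by rewrite mulr0.
by case: (H _ _ Hb) => _ E; rewrite E eqxx in Hs.
Qed.

Definition pointmx m p (i1 : 'I_m) (j1 : 'I_p) (x : k) : 'M[k]_(m,p) :=
  \matrix_(i, j) (if (i == i1) && (j == j1) then x else 0).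

Lemma Dexists n s1' s2' t1' t2' (i0 : 'I_s2') (j0 : 'I_t2') :
  (forall h : 'M[k]_(s2',t2'), is_Tmap n t1' t2' (tau2 n s1') s2' h ->
     forall i j, h i j != 0 -> i = i0 /\ j = j0) ->
  (exists Psi : 'M[k]_(s2',t2'), Dmap_nz n s1' s2' t1' t2' Psi) ->
  (tau2 n s1' + i0 == t1' + j0 %[mod n])%N.
Proof.
move=> Hs [Psi [h [Hh Hp]]]; have [i [j Hij]] := pairing_nz Hp.
have [Ei Ej] := Hs h Hh i j Hij.
move: Hh => /andP [_ /forallP /(_ i) /forallP /(_ j) /implyP /(_ Hij)].
by rewrite Ei Ej.
Qed.

Lemma Dexists2 n s1' s2' t1' t2' (i0 : 'I_s2') (j0 : 'I_t2') (h0 : 'M[k]_(s2',t2')) :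
  is_Tmap n t1' t2' (tau2 n s1') s2' h0 -> h0 i0 j0 != 0 ->
  exists Psi : 'M[k]_(s2',t2'), Dmap_nz n s1' s2' t1' t2' Psi.
Proof.
move=> Hh Hnz; exists (pointmx i0 j0 1); exists h0; split => //.
rewrite (@pairing_single _ _ _ _ i0 j0).
  by rewrite mxE !eqxx mul1r.
move=> i j; rewrite mxE; case: (i =P i0) => Ei; case: (j =P j0) => Ej /=;
  by [move=> _; split | rewrite mul0r eqxx].
Qed.

Lemma Dfact n s1' s2' t1' t2' s1 s2 t1 t2 (i0 : 'I_s2') (j0 : 'I_t2') (i1 : 'I_s2) (j1 : 'I_t2)
  (f : 'M[k]_(s2,s2')) (g : 'M[k]_(t2',t2)) (h1 : 'M[k]_(s2,t2)) (Psi : 'M[k]_(s2',t2')) :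
  (forall h : 'M[k]_(s2',t2'), is_Tmap n t1' t2' (tau2 n s1') s2' h ->
     forall i j, h i j != 0 -> i = i0 /\ j = j0) ->
  is_Tmap n s1' s2' s1 s2 f -> is_Tmap n t1 t2 t1' t2' g -> f i1 i0 = 1 -> g j0 j1 = 1 ->
  is_Tmap n t1 t2 (tau2 n s1) s2 h1 -> h1 i1 j1 != 0 ->
  Dmap_nz n s1' s2' t1' t2' Psi -> Dfactors n s1' s2' t1' t2' s1 s2 t1 t2 Psi.
Proof.
move=> Hs Hf Hg Hf1 Hg1 Hh1 Hh1nz [h [Hh Hp]].
have Hsing : forall h', is_Tmap n t1' t2' (tau2 n s1') s2' h' ->
    pairing _ _ Psi h' = Psi i0 j0 * h' i0 j0.
  move=> h' Hh'; apply: pairing_single => i j Hij; apply: (Hs h' Hh').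
  by apply: contra Hij => /eqP ->; rewrite mulr0.
have HP0 : Psi i0 j0 != 0.
  by move: Hp; rewrite Hsing //; apply: contra => /eqP ->; rewrite mul0r.
have HPhi : forall M : 'M[k]_(s2,t2), pairing _ _ (pointmx i1 j1 (Psi i0 j0)) M =
    Psi i0 j0 * M i1 j1.
  move=> M; rewrite (@pairing_single _ _ _ _ i1 j1).
    by rewrite mxE !eqxx.
  move=> i j; rewrite mxE; case: (i =P i1) => Ei; case: (j =P j1) => Ej /=;
    by [move=> _; split | rewrite mul0r eqxx].
exists (pointmx i1 j1 (Psi i0 j0)), f, g; split => //.
  by exists h1; split => //; rewrite HPhi mulf_neq0.
move=> h' Hh'; rewrite HPhi Hsing // (@mul3_single _ _ _ _ _ _ _ _ _ i0 j0).
  by rewrite Hf1 Hg1 mul1r mulr1.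
exact: Hs.
Qed.

End Gen.

Ltac li := repeat match goal with H : context[modn] |- _ => clear H end; lia.

Lemma cadd n x x' l : x %% n = x' %% n -> (x + l) %% n = (x' + l) %% n.
Proof. by move=> H; rewrite -modnDml H modnDml. Qed.

Lemma grade_zero (k : fieldType) n a b c d (f : 'M[k]_(d,b)) : is_Tmap n a b c d f ->
  (forall (l : 'I_d) (j : 'I_b), (c + l == a + j %[mod n]) -> False) -> f = 0%R.
Proof.
move=> /andP[_ /forallP H] Hf; apply/matrixP => l j; rewrite mxE.
move/forallP: (H l) => /(_ j) /implyP Hi.
by case: (f l j =P 0%R) => // /eqP /Hi /Hf.
Qed.

Lemma grade_nz (k : fieldType) n a b c d (f : 'M[k]_(d,b)) l j : is_Tmap n a b c d f ->
  (f l j != 0)%R -> (c + l == a + j %[mod n]).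
Proof.
by move=> /andP[_ /forallP /(_ l) /forallP /(_ j) /implyP].
Qed.

Theorem lemma2p2 (k : closedFieldType) (n a b c y1 y2 z1 z2 : nat) :
  (2 <= n)%N -> (3 <= b <= n - 1)%N -> (1 <= c <= b - 2)%N ->
  in_wing n a c y1 y2 -> in_wing n (a + c + 1) (b - c - 1) z1 z2 ->
  [/\ (* (i) *)
      (forall f : 'M[k]_(y2, z2), is_Tmap n z1 z2 y1 y2 f -> f = 0%R),
      (* (ii) *)
      (forall f : 'M[k]_(z2, y2), is_Tmap n y1 y2 z1 z2 f -> f = 0%R),
      (* (iii) *)
      ((exists Psi : 'M[k]_(z2, y2), Dmap_nz n z1 z2 y1 y2 Psi) <->
         left_edge n (a + c + 1) (b - c - 1) z1 z2 /\ right_edge n a c y1 y2) /\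
      (forall Psi : 'M[k]_(z2, y2), Dmap_nz n z1 z2 y1 y2 Psi ->
         Dfactors n z1 z2 y1 y2 (a + c + 1) (b - c - 1) a c Psi) &
      (* (iv) *)
      ((exists Psi : 'M[k]_(y2, z2), Dmap_nz n y1 y2 z1 z2 Psi) <->
         [/\ right_edge n (a + c + 1) (b - c - 1) z1 z2, left_edge n a c y1 y2
           & b = (n - 1)%N]) /\
      (forall Psi : 'M[k]_(y2, z2), Dmap_nz n y1 y2 z1 z2 Psi ->
         Dfactors n y1 y2 z1 z2 a b a b Psi)].
Proof.
move=> Hn /andP[Hb1 Hb2] /andP[Hc1 Hc2] [s [/eqP Hy [Hy2 Hsy]]] [t [/eqP Hz [Hz2 Htz]]].
have A12 : forall l j, l < y2 -> j < z2 -> (y1 + l) %% n = (z1 + j) %% n -> False.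
  move=> l j Hl Hj; rewrite (cadd _ Hy) (cadd _ Hz) => E.
  have := cong_small E; clear E Hy Hz; lia.
have A3 : forall l j, l < z2 -> j < y2 -> (tau2 n z1 + l) %% n = (y1 + j) %% n ->
    [/\ t = 0, l = 0, j = y2 - 1 & s + y2 = c].
  move=> l j Hl Hj; rewrite /tau2 -addnA (cadd _ Hz) (cadd _ Hy) addnA.
  rewrite (_ : a + c + 1 + t + (n - 2) + l = (a + c + t + l - 1) + n); last by lia.
  rewrite modnDr => E.
  have HH : a + s + j = a + c + t + l - 1 by apply: (cong_small (esym E)); clear E Hy Hz; lia.
  clear E Hy Hz; split; lia.
have A4 : forall l j, l < y2 -> j < z2 -> (tau2 n y1 + l) %% n = (z1 + j) %% n ->
    [/\ l = 0, j = z2 - 1, s = 0, t + z2 = b - c - 1 & b = n - 1].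
  move=> l j Hl Hj; rewrite /tau2 -addnA (cadd _ Hz) (cadd _ Hy) addnA => E.
  have HH : a + c + 1 + t + j = a + s + (n - 2) + l.
    by apply: (cong_small (esym E)); clear E Hy Hz A12 A3; lia.
  clear E Hy Hz A12 A3; split; lia.
have Hz2' : 0 < z2 by [].
have Hy2' : y2 - 1 < y2 by li.
have Hz2'' : z2 - 1 < z2 by li.
have Hy2'' : 0 < y2 by [].
pose i0 := Ordinal Hz2'. pose j0 := Ordinal Hy2'.
pose i0' := Ordinal Hy2''. pose j0' := Ordinal Hz2''.
have Hsupp3 : forall h : 'M[k]_(z2, y2), is_Tmap n y1 y2 (tau2 n z1) z2 h ->
    forall i j, (h i j != 0)%R -> i = i0 /\ j = j0.
  move=> h Hh i j /(grade_nz Hh) /eqP /A3 [] // _ Ei Ej _.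
  by split; apply: val_inj.
have Hsupp4 : forall h : 'M[k]_(y2, z2), is_Tmap n z1 z2 (tau2 n y1) y2 h ->
    forall i j, (h i j != 0)%R -> i = i0' /\ j = j0'.
  move=> h Hh i j /(grade_nz Hh) /eqP /A4 [] // Ei Ej _ _ _.
  by split; apply: val_inj.
have F3 : (exists Psi : 'M[k]_(z2, y2), Dmap_nz n z1 z2 y1 y2 Psi) ->
     left_edge n (a + c + 1) (b - c - 1) z1 z2 /\ right_edge n a c y1 y2.
  move/(Dexists Hsupp3) => /eqP /A3 [] // Et _ _ Es.
  split; split; try (apply/andP; split; li).
    by apply/eqP; rewrite Hz Et addn0.
  by apply/eqP; rewrite Hy; congr (_ %% _); li.
have F4 : (exists Psi : 'M[k]_(y2, z2), Dmap_nz n y1 y2 z1 z2 Psi) ->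
     [/\ right_edge n (a + c + 1) (b - c - 1) z1 z2, left_edge n a c y1 y2
           & b = (n - 1)%N].
  move/(Dexists Hsupp4) => /eqP /A4 [] // _ _ Es Et Eb.
  split => //; split; try (apply/andP; split; li).
    by apply/eqP; rewrite Hz; congr (_ %% _); li.
  by apply/eqP; rewrite Hy Es addn0.
split.
- move=> f Hf; apply: (grade_zero Hf) => l j /eqP.
  by apply: A12.
- move=> f Hf; apply: (grade_zero Hf) => l j /eqP E.
  by apply: (A12 j l) => //; rewrite E.
- split => //.
  + split => // -[[/eqP Hl1 Hl2] [/eqP Hr1 Hr2]].
    apply: (Dexists2 (i0:=i0) (j0:=j0) (h0:=shiftmx k z2 y2 (y2 - 1))).
      apply: shift_Tmap; first li.
      apply/eqP; rewrite /tau2 (cadd _ Hl1) (cadd _ Hr1).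
      rewrite (_ : a + c + 1 + (n - 2) = (a + c - y2 + (y2 - 1)) + n); last by li.
      by rewrite modnDr.
    by rewrite mxE /= ?add0n ?eqxx ?oner_neq0.
  + move=> Psi HPsi.
    have [[/eqP Hl1 Hl2] [/eqP Hr1 Hr2]] := F3 (ex_intro _ Psi HPsi).
    have Hi1 : 0 < b - c - 1 by li.
    have Hj1 : c - 1 < c by li.
    apply: (Dfact (i0:=i0) (j0:=j0) (i1:=Ordinal Hi1) (j1:=Ordinal Hj1)
       (f:=shiftmx k (b - c - 1) z2 0) (g:=shiftmx k y2 c (c - y2)) (h1:=shiftmx k (b - c - 1) c (c - 1))
       Hsupp3 _ _ _ _ _ _ HPsi).
    * apply: shift_Tmap; first li.
      by apply/eqP; rewrite addn0 Hl1.
    * apply: shift_Tmap; first li.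
      by apply/eqP; rewrite Hr1; congr (_ %% _); li.
    * by rewrite mxE /= ?addn0 ?eqxx.
    * by rewrite mxE /= (_ : y2 - 1 + (c - y2) = c - 1) ?eqxx //; li.
    * apply: shift_Tmap; first li.
      apply/eqP; rewrite /tau2.
      rewrite (_ : a + c + 1 + (n - 2) = (a + (c - 1)) + n); last by li.
      by rewrite modnDr.
    * by rewrite mxE /= ?add0n ?eqxx ?oner_neq0.
- split => //.
  + split => // -[[/eqP Hl1 Hl2] [/eqP Hr1 Hr2] Eb].
    apply: (Dexists2 (i0:=i0') (j0:=j0') (h0:=shiftmx k y2 z2 (z2 - 1))).
      apply: shift_Tmap; first li.
      apply/eqP; rewrite /tau2 (cadd _ Hl1) (cadd _ Hr1).
      rewrite (_ : a + c + 1 + (b - c - 1) - z2 + (z2 - 1) = a + (n - 2)); last by li.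
      by [].
    by rewrite mxE /= ?add0n ?eqxx ?oner_neq0.
  + move=> Psi HPsi.
    have [[/eqP Hl1 Hl2] [/eqP Hr1 Hr2] Eb] := F4 (ex_intro _ Psi HPsi).
    have Hi1 : 0 < b by li.
    have Hj1 : b - 1 < b by li.
    apply: (Dfact (i0:=i0') (j0:=j0') (i1:=Ordinal Hi1) (j1:=Ordinal Hj1)
       (f:=shiftmx k b y2 0) (g:=shiftmx k z2 b (b - z2)) (h1:=shiftmx k b b (b - 1))
       Hsupp4 _ _ _ _ _ _ HPsi).
    * apply: shift_Tmap; first li.
      by apply/eqP; rewrite addn0 Hr1.
    * apply: shift_Tmap; first li.
      by apply/eqP; rewrite Hl1; congr (_ %% _); li.
    * by rewrite mxE /= ?addn0 ?eqxx.
    * by rewrite mxE /= (_ : z2 - 1 + (b - z2) = b - 1) ?eqxx //; li.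
    * apply: shift_Tmap; first li.
      apply/eqP; rewrite /tau2; congr (_ %% _); li.
    * by rewrite mxE /= ?add0n ?eqxx ?oner_neq0.
Qed.
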